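(* Let $R$ be a commutative ring and $S$ a multiplicative subset of $R$ consisting of non-zero-divisors. Then $R$ is a $u$-$S$-semisimple ring if and only if $R$ is a semisimple ring.
   Context: An $R$-module $T$ is $u$-$S$-torsion if $sT=0$ for some $s\in S$. A sequence $M\xrightarrow{f}N\xrightarrow{g}L$ is $u$-$S$-exact at $N$ if there is $s\in S$ with $s\,\mathrm{Ker}(g)\subseteq\mathrm{Im}(f)$ and $s\,\mathrm{Im}(f)\subseteq\mathrm{Ker}(g)$; a short sequence $0\to A\xrightarrow{f}B\to C\to0$ is $u$-$S$-exact if $u$-$S$-exact at each term, and $u$-$S$-split if there exist $s\in S$ and $h:B\to A$ with $h\circ f=s\,\mathrm{Id}_A$. An $R$-module $M$ is $u$-$S$-semisimple if every $u$-$S$-exact sequence $0\to A\to M\to C\to0$ is $u$-$S$-split; $R$ is a $u$-$S$-semisimple ring if every free $R$-module is $u$-$S$-semisimple. *)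

(* Defs.v *)
From HB Require Import structures.
From mathcomp Require Import all_boot all_order all_algebra.
Set Implicit Arguments. Unset Strict Implicit. Unset Printing Implicit Defensive.
Import GRing.Theory.
Local Open Scope ring_scope.

Definition multiplicative_subset (R : comPzRingType) (S : R -> Prop) : Prop :=
  S 1 /\ (forall a b, S a -> S b -> S (a * b)).

Definition nonzerodivisors (R : comPzRingType) (S : R -> Prop) : Prop :=
  forall s, S s -> forall r : R, s * r = 0 -> r = 0.

Definition uS_exact_at (R : comPzRingType) (S : R -> Prop)
    (M N L : lmodType R) (f : M -> N) (g : N -> L) : Prop :=
  exists2 s, S s &
    (forall x : N, g x = 0 -> exists y : M, f y = s *: x) /\
    (forall y : M, g (s *: f y) = 0).

Notation zmod0 R := ('rV[R]_0).

Definition uS_short_exact (R : comPzRingType) (S : R -> Prop)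
    (A B C : lmodType R) (f : {linear A -> B}) (g : {linear B -> C}) : Prop :=
  [/\ uS_exact_at S (fun _ : zmod0 R => (0 : A)) f,
      uS_exact_at S f g &
      uS_exact_at S g (fun _ : C => (0 : zmod0 R))].

Definition uS_split (R : comPzRingType) (S : R -> Prop)
    (A B : lmodType R) (f : {linear A -> B}) : Prop :=
  exists2 s, S s & exists h : {linear B -> A}, forall a, h (f a) = s *: a.

Definition uS_semisimple_module (R : comPzRingType) (S : R -> Prop)
    (M : lmodType R) : Prop :=
  forall (A C : lmodType R) (f : {linear A -> M}) (g : {linear M -> C}),
    uS_short_exact S f g -> uS_split S f.

Definition free_module (R : comPzRingType) (M : lmodType R) : Prop :=
  exists (I : eqType) (b : I -> M),
    (forall x : M, exists (s : seq I) (c : I -> R),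
        x = \sum_(i <- s) c i *: b i) /\
    (forall (s : seq I) (c : I -> R), uniq s ->
        \sum_(i <- s) c i *: b i = 0 -> forall i, i \in s -> c i = 0).

Definition uS_semisimple_ring (R : comPzRingType) (S : R -> Prop) : Prop :=
  forall M : lmodType R, free_module M -> uS_semisimple_module S M.

Definition submodule (R : comPzRingType) (M : lmodType R) (N : M -> Prop) : Prop :=
  [/\ N 0, (forall x y, N x -> N y -> N (x + y)) &
      (forall (r : R) x, N x -> N (r *: x))].

Definition semisimple_module (R : comPzRingType) (M : lmodType R) : Prop :=
  forall N : M -> Prop, submodule N ->
    exists2 K : M -> Prop, submodule K &
      (forall x, N x -> K x -> x = 0) /\
      (forall x, exists a b, [/\ N a, K b & x = a + b]).

Definition semisimple_ring (R : comPzRingType) : Prop :=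
  semisimple_module R^o.

(* Main.v *)
Require Import Defs.
From HB Require Import structures.
From mathcomp Require Import all_boot all_order all_algebra.
From mathcomp Require Import boolp functions classical_sets.
From mathcomp Require Import ring.
Set Implicit Arguments. Unset Strict Implicit. Unset Printing Implicit Defensive.
Import GRing.Theory.
Local Open Scope ring_scope.

Section SubMod.
Context (R : comPzRingType) (V : lmodType R) (P : V -> Prop) (HP : submodule P).
Definition spred : {pred V} := fun x => `[< P x >].
Lemma spred_closed : subsemimod_closed spred.
Proof.
case: HP => P0 PD PZ; split; [split|].
- by apply/asboolP.
- by move=> x y /asboolP Px /asboolP Py; apply/asboolP; apply: PD.
- by move=> a x /asboolP Px; apply/asboolP; apply: PZ.
Qed.
Definition SubT of submodule P := {x : V | x \in spred}.
Local Notation SubTh := (SubT HP).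
HB.instance Definition _ := [isSub of SubTh for @proj1_sig V (fun x => x \in spred)].
HB.instance Definition _ := [Choice of SubTh by <:].
HB.instance Definition _ := GRing.SubChoice_isSubLmodule.Build R V spred SubTh spred_closed.
Lemma SubT_val0 : (val (0 : SubTh)) = 0. Proof. by []. Qed.
Lemma SubT_valZ r (x : SubTh) : val (r *: x) = r *: val x. Proof. by []. Qed.
Lemma SubT_valD (x y : SubTh) : val (x + y) = val x + val y. Proof. by []. Qed.
End SubMod.

Section MkLin.
Context (R : comPzRingType) (M A : lmodType R) (h : M -> A)
  (hlin : forall r x y, h (r *: x + y) = r *: h x + h y).
Definition hwrap := h.
Lemma hwrap_lin : linear_for *:%R hwrap.
Proof. by move=> r x y; apply: hlin. Qed.
HB.instance Definition _ := GRing.isLinear.Build R M A *:%R hwrap hwrap_lin.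
Lemma mk_linear : exists hl : {linear M -> A}, forall x, hl x = h x.
Proof. by exists hwrap. Qed.
End MkLin.

Section QuotMod.
Context (R : comPzRingType) (V : lmodType R) (P : V -> Prop) (HP : submodule P).
Definition qpred (x : V) : {pred V} := fun y => `[< P (y - x) >].
Lemma qex x : exists y, qpred x y.
Proof. by exists x; apply/asboolP; rewrite subrr; case: HP. Qed.
Definition canon x := xchoose (qex x).
Definition eqv x y := P (x - y).
Lemma PN x : P x -> P (- x).
Proof. by case: HP => _ _ PZ Px; rewrite -scaleN1r; apply: PZ. Qed.
Lemma eqv_refl x : eqv x x. Proof. by rewrite /eqv subrr; case: HP. Qed.
Lemma eqv_sym x y : eqv x y -> eqv y x.
Proof. by move=> /PN; rewrite /eqv opprB. Qed.
Lemma eqv_trans x y z : eqv x y -> eqv y z -> eqv x z.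
Proof.
case: HP => _ PD _ Hxy Hyz; have := PD _ _ Hxy Hyz.
by rewrite /eqv addrA subrK.
Qed.
Lemma eqvD x y x' y' : eqv x x' -> eqv y y' -> eqv (x + y) (x' + y').
Proof.
case: HP => _ PD _ H1 H2; have := PD _ _ H1 H2.
by rewrite /eqv opprD addrACA.
Qed.
Lemma eqvN x x' : eqv x x' -> eqv (- x) (- x').
Proof. by move=> /PN; rewrite /eqv opprB opprK addrC. Qed.
Lemma eqvZ r x x' : eqv x x' -> eqv (r *: x) (r *: x').
Proof. by case: HP => _ _ PZ /(PZ r); rewrite /eqv scalerBr. Qed.
Lemma canonP x : eqv (canon x) x.
Proof. by have /asboolP := xchooseP (qex x). Qed.
Lemma canon_eq x y : eqv x y -> canon x = canon y.
Proof.
move=> Hxy; apply: eq_xchoose => z; rewrite /qpred.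
apply/asboolP/asboolP => H.
- exact: (eqv_trans H Hxy).
- exact: (eqv_trans H (eqv_sym Hxy)).
Qed.
Lemma canon_idem x : canon (canon x) == canon x.
Proof. by apply/eqP/canon_eq/canonP. Qed.
Definition QT := {x : V | canon x == x}.
Local Notation QTh := QT.
HB.instance Definition _ := [isSub of QTh for @proj1_sig V (fun x => canon x == x)].
HB.instance Definition _ := [Choice of QTh by <:].
Definition qmk (x : V) : QTh := exist _ (canon x) (canon_idem x).
Lemma qmk_eq x y : eqv x y -> qmk x = qmk y.
Proof. by move=> H; apply: val_inj; rewrite /= (canon_eq H). Qed.
Lemma qmk_eqv x y : qmk x = qmk y -> eqv x y.
Proof.
move=> /(congr1 val) /= E.
apply: (eqv_trans (eqv_sym (canonP x))); rewrite E; exact: canonP.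
Qed.
Lemma qmkK (a : QTh) : qmk (val a) = a.
Proof. by apply: val_inj => /=; apply/eqP; case: a. Qed.
Lemma eqv_val x : eqv (val (qmk x)) x. Proof. exact: canonP. Qed.
Definition qzero := qmk 0.
Definition qadd (a b : QTh) := qmk (val a + val b).
Definition qopp (a : QTh) := qmk (- val a).
Definition qscale r (a : QTh) := qmk (r *: val a).
Lemma qaddA : associative qadd.
Proof.
move=> a b c; apply: qmk_eq; rewrite /qadd.
apply: (eqv_trans (eqvD (eqv_refl _) (eqv_val _))).
rewrite addrA; exact: (eqvD (eqv_sym (eqv_val _)) (eqv_refl _)).
Qed.
Lemma qaddC : commutative qadd.
Proof. by move=> a b; rewrite /qadd addrC. Qed.
Lemma qadd0 : left_id qzero qadd.
Proof.
move=> a; rewrite -[RHS]qmkK; apply: qmk_eq.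
apply: (eqv_trans (eqvD (eqv_val _) (eqv_refl _))).
by rewrite add0r; apply: eqv_refl.
Qed.
Lemma qaddN : left_inverse qzero qopp qadd.
Proof.
move=> a; apply: qmk_eq.
apply: (eqv_trans (eqvD (eqv_val _) (eqv_refl _))).
by rewrite addNr; apply: eqv_refl.
Qed.
HB.instance Definition _ := GRing.isZmodule.Build QTh qaddA qaddC qadd0 qaddN.
Lemma qscaleA a b v : qscale a (qscale b v) = qscale (a * b) v.
Proof.
apply: qmk_eq; apply: (eqv_trans (eqvZ _ (eqv_val _))).
by rewrite scalerA; apply: eqv_refl.
Qed.
Lemma qscale1 : left_id 1 qscale.
Proof. by move=> a; rewrite /qscale scale1r qmkK. Qed.
Lemma qscaleDr : right_distributive qscale +%R.
Proof.
move=> r a b; apply: qmk_eq.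
apply: (eqv_trans (eqvZ _ (eqv_val _))).
apply: (eqv_trans _ (eqvD (eqv_sym (eqv_val _)) (eqv_sym (eqv_val _)))).
by rewrite scalerDr; apply: eqv_refl.
Qed.
Lemma qscaleDl v : {morph qscale^~ v : a b / a + b}.
Proof.
move=> a b; apply: qmk_eq.
apply: (eqv_trans _ (eqvD (eqv_sym (eqv_val _)) (eqv_sym (eqv_val _)))).
by rewrite scalerDl; apply: eqv_refl.
Qed.
HB.instance Definition _ := GRing.Zmodule_isLmodule.Build R QTh qscaleA qscale1 qscaleDr qscaleDl.
Lemma qmk_lin r x y : qmk (r *: x + y) = r *: qmk x + qmk y.
Proof.
apply: qmk_eq.
apply: (eqv_trans _ (eqvD (eqv_sym (eqv_val _)) (eqv_refl _))).
exact: (eqvD (eqvZ _ (eqv_sym (eqv_val _))) (eqv_sym (eqv_val _))).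
Qed.
Lemma qmk0 x : qmk x = 0 -> P x.
Proof. by move=> /qmk_eqv; rewrite /eqv subr0. Qed.
End QuotMod.

Definition finsupp (R : comPzRingType) (x : R -> R^o) : Prop :=
  exists s : seq R, forall t, t \notin s -> x t = 0.

Lemma fctD (T : Type) (R : comPzRingType) (x y : T -> R^o) t : (x + y) t = x t + y t.
Proof. by []. Qed.
Lemma fctZ (T : Type) (R : comPzRingType) r (x : T -> R^o) t : (r *: x) t = r * x t.
Proof. by []. Qed.
Lemma fct0 (T : Type) (R : comPzRingType) t : (0 : T -> R^o) t = 0.
Proof. by []. Qed.

Lemma finsupp_sub (R : comPzRingType) : submodule (@finsupp R).
Proof.
split.
- by exists [::].
- move=> x y [s1 H1] [s2 H2]; exists (s1 ++ s2) => t; rewrite mem_cat negb_or => /andP[t1 t2].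
  by rewrite fctD H1 // H2 // addr0.
- move=> r x [s H]; exists s => t ts; by rewrite fctZ H // mulr0.
Qed.


Lemma sum_if (I : eqType) (V : nmodType) (s : seq I) (c : I -> V) u : uniq s ->
  \sum_(i <- s) (if u == i then c i else 0) = if u \in s then c u else 0.
Proof.
move=> us; case: ifP => us'.
- rewrite (bigD1_seq u) //= eqxx big1 ?addr0 // => i /negbTE.
  by rewrite eq_sym => ->.
- rewrite big1_seq // => i /andP[_ iin]; case: eqP => // ui.
  by rewrite ui iin in us'.
Qed.

Definition delta (R : comPzRingType) (t : R) : R -> R^o :=
  fun u => (u == t)%:R.

Lemma delta_fs (R : comPzRingType) (t : R) : delta t \in spred (@finsupp R).
Proof.
apply/asboolP; exists [:: t] => u; rewrite inE /delta => /negbTE -> //.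
Qed.

Definition dlt (R : comPzRingType) (t : R) : SubT (finsupp_sub R) :=
  Sub (delta t) (delta_fs t).

Lemma free_F (R : comPzRingType) : free_module (SubT (finsupp_sub R)).
Proof.
exists R, (@dlt R); split.
- move=> x; have /asboolP [sx Hsx] := valP x.
  exists (undup sx), (val x); apply: val_inj; rewrite linear_sum /=.
  apply: funext => u; rewrite fct_sumE.
  under eq_bigr => i _ do rewrite fctZ /delta mulr_natr mulrb.
  rewrite sum_if ?undup_uniq // mem_undup; case: ifP => // /negbT.
  exact: Hsx.
- move=> s c us; move/(congr1 (fun x => val x)); rewrite linear_sum /= => E i iin.
  have := congr1 (fun f => f i) E; rewrite fct_sumE /=.
  under eq_bigr => j _ do rewrite fctZ /delta mulr_natr mulrb.
  by rewrite sum_if // iin.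
Qed.

Lemma reverse (R : comPzRingType) (S : R -> Prop) :
  multiplicative_subset S -> nonzerodivisors S ->
  uS_semisimple_ring S -> semisimple_ring R.
Proof.
move=> [S1 _] nzd Hss N HN.
pose F := SubT (finsupp_sub R).
pose Kp : F -> Prop := fun x => forall t, exists2 n, N n & val x t = t * n.
have HK : submodule Kp.
  case: HN => N0 ND NZ; split.
  - by move=> t; exists 0 => //; rewrite mulr0.
  - move=> x y Hx Hy t; case: (Hx t) => n1 Nn1 E1; case: (Hy t) => n2 Nn2 E2.
    exists (n1 + n2); first exact: ND.
    have -> : val (x + y) = val x + val y by [].
    by rewrite fctD E1 E2 mulrDr.
  - move=> r x Hx t; case: (Hx t) => n Nn E; exists (r * n); first exact: (NZ r n Nn).
    have -> : val (r *: x) = r *: val x by [].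
    by rewrite fctZ E mulrCA.
pose A := SubT HK. pose C := QT HK.
pose f : {linear A -> F} := val.
have [g gE] := mk_linear (@qmk_lin _ _ _ HK).
have ex : uS_short_exact S f g.
  split.
  - exists 1 => //; split.
    + move=> x fx0; exists 0; rewrite scale1r; apply: val_inj; exact: (esym fx0).
    + by move=> y; rewrite scaler0 linear0.
  - exists 1 => //; split.
    + move=> x; rewrite gE => gx0.
      have Kx : x \in spred Kp by apply/asboolP; apply: (qmk0 gx0).
      by exists (Sub x Kx : A); rewrite scale1r.
    + move=> y; rewrite scale1r gE; apply: (@qmk_eq _ _ _ HK).
      rewrite /eqv subr0; exact/asboolP/(valP y).
  - exists 1 => //; split => // c _; exists (val c).
    by rewrite gE scale1r qmkK.
have [s Ss [h hE]] := Hss F (free_F R) A C f g ex.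
pose d : F := dlt s.
have /asboolP := valP (h d); case/(_ s) => n1 Nn1 E1.
have key : forall n, N n -> n * n1 = n.
  move=> n Nn.
  have kmem : ((s * n) *: d) \in spred Kp.
    apply/asboolP => t.
    have -> : val ((s * n) *: d) = (s * n) *: delta s by [].
    rewrite fctZ /delta.
    case: (eqVneq t s) => [->|ts]; first by exists n => //; rewrite mulr1n mulr1.
    case: HN => N0 _ _; exists 0 => //.
    by rewrite mulr0n !mulr0.
  have := hE (Sub ((s * n) *: d) kmem : A).
  rewrite /f /= linearZ => /(congr1 (fun a : A => val (val a) s)).
  rewrite /= !linearZ /= !fctZ E1 /delta eqxx mulr1 => E.
  have C2 : forall a b, s * (s * a) = s * (s * b) -> a = b.
    move=> a b H; apply/eqP; rewrite -subr_eq0; apply/eqP.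
    apply: (nzd s Ss); apply: (nzd s Ss); by rewrite !mulrBr H subrr.
  apply: C2.
  have -> : s * (s * (n * n1)) = s * n * (s * n1) by ring.
  by rewrite E; ring.
case: HN => N0 ND NZ.
exists (fun x : R^o => x * n1 = 0).
  split; first by rewrite mul0r.
  - by move=> x y Hx Hy; rewrite mulrDl Hx Hy addr0.
  - move=> r x Hx; have -> : r *: x = r * x by [].
    by rewrite -mulrA Hx mulr0.
split.
  by move=> x Nx Kx; rewrite -(key x Nx).
move=> x; exists (x * n1), (x - x * n1); split.
- exact: (NZ x n1 Nn1).
- by rewrite mulrBl -mulrA (key n1 Nn1) subrr.
- by rewrite addrC subrK.
Qed.

Section Fwd.
Local Open Scope classical_set_scope.
Lemma forward (R : comPzRingType) (S : R -> Prop) :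
  semisimple_ring R -> uS_semisimple_ring S.
Proof.
move=> Hss M _ A C f g [[s Ss [Hf _]] _ _].
have finj : forall a, f a = 0 -> s *: a = 0.
  by move=> a /Hf [y <-].
pose valid (G : set (M * A)) :=
  [/\ (forall x a y b, G (x, a) -> G (y, b) -> G (x + y, a + b)),
      (forall r x a, G (x, a) -> G (r *: x, r *: a)),
      (forall a, G (f a, s *: a)) &
      (forall a, G (0, a) -> a = 0)].
pose PG (G : set (M * A)) := G = set0 \/ valid G.
have Hz : forall FF : set (set (M * A)), FF `<=` PG -> total_on FF subset ->
    PG (\bigcup_(X in FF) X).
  move=> FF FP Ftot.
  case: (pselect (exists X, FF X /\ exists p, X p)) =>
     [[X0 [FX0 [p0 X0p0]]] | nF]; last first.
    left; apply/seteqP; split => // p [X FX Xp]; apply: nF; exists X; split => //.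
    by exists p.
  right.
  have vX : forall X p, FF X -> X p -> valid X.
    move=> X p FX Xp; case: (FP X FX) => // X0'; by rewrite X0' in Xp.
  split.
  - move=> x a y b [X FX Xa] [Y FY Yb]; case: (Ftot X Y FX FY) => XY.
    + case: (vX Y _ FY Yb) => Hadd _ _ _; exists Y => //; apply: Hadd => //.
      exact: XY.
    + case: (vX X _ FX Xa) => Hadd _ _ _; exists X => //; apply: Hadd => //.
      exact: XY.
  - move=> r x a [X FX Xa]; exists X => //; case: (vX X _ FX Xa) => _ HZ _ _.
    exact: HZ.
  - move=> a; exists X0 => //; case: (vX X0 _ FX0 X0p0) => _ _ Hb _; exact: Hb.
  - move=> a [X FX Xa]; case: (vX X _ FX Xa) => _ _ _ Hf0; exact: Hf0.
have [G0 [PG0 G0max]] := Zorn_bigcup Hz.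
pose B0 : set (M * A) := fun p => exists a, p = (f a, s *: a).
have vB0 : valid B0.
  split.
  - move=> x a y b [a1 [= -> ->]] [a2 [= -> ->]]; exists (a1 + a2).
    by rewrite raddfD scalerDr.
  - move=> r x a [a1 [= -> ->]]; exists (r *: a1).
    by congr pair; [rewrite linearZ | rewrite !scalerA mulrC].
  - by move=> a; exists a.
  - move=> a [a1 [= /esym f0 ->]]; exact: finj.
have vG0 : valid G0.
  case: PG0 => // G00; exfalso.
  apply: (G0max B0); last by right.
  rewrite G00; split; first by move=> ?.
  move=> /(_ (f 0, s *: 0)) H.
  have : B0 (f 0, s *: 0) by exists 0.
  by move/H.
case: vG0 => G0D G0Z G0b G0f.
have G00 : G0 (0, 0) by have := G0b 0; rewrite linear0 scaler0.
have G0N : forall x a, G0 (x, a) -> G0 (- x, - a).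
  by move=> x a H; rewrite -!scaleN1r; apply: G0Z.
have dom : forall m, exists a, G0 (m, a).
  move=> m.
  pose I : R^o -> Prop := fun r => exists a, G0 (r *: m, a).
  have HI : submodule I.
    split.
    - by exists 0; rewrite scale0r; have := G0b 0; rewrite linear0 scaler0.
    - move=> r1 r2 [a1 H1] [a2 H2]; exists (a1 + a2); rewrite scalerDl.
      exact: G0D.
    - move=> r x [a H]; exists (r *: a).
      have -> : ((r *: x : R^o) *: m) = r *: (x *: m).
        by rewrite scalerA.
      exact: G0Z.
  have [K HK [IK IKsum]] := Hss I HI.
  have [e [k [Ie Kk E1]]] := IKsum 1.
  have re : forall r, I r -> r = r * e.
    move=> r Ir.
    have rk0 : r * k = 0.
      apply: IK.
      - case: HI => _ _ IZ; have := IZ k r Ir.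
        have -> : (k *: r : R^o) = r * k by rewrite mulrC.
        by [].
      - case: HK => _ _ KZ; exact: (KZ r k Kk).
    by rewrite -{1}(mulr1 r) E1 mulrDr rk0 addr0.
  case: (Ie) => ae Hae.
  pose G' : set (M * A) := fun p => exists x a r,
      G0 (x, a) /\ p = (x + r *: m, a + r *: ae).
  have vG' : valid G'.
    split.
    - move=> x a y b [x1 [a1 [r1 [H1 [-> ->]]]]] [x2 [a2 [r2 [H2 [-> ->]]]]].
      exists (x1 + x2), (a1 + a2), (r1 + r2); split; first exact: G0D.
      by rewrite !scalerDl; congr pair; rewrite addrACA.
    - move=> r x a [x1 [a1 [r1 [H1 [-> ->]]]]].
      exists (r *: x1), (r *: a1), (r * r1); split; first exact: G0Z.
      by rewrite !scalerDr !scalerA.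
    - move=> a; exists (f a), (s *: a), 0; split => //.
      by rewrite !scale0r !addr0.
    - move=> b [x [a [r [H [E0 ->]]]]].
      have Ir : I r.
        exists (- a); have -> : r *: m = - x.
          by apply/eqP; rewrite -addr_eq0 addrC -E0.
        exact: G0N.
      have G0r : G0 (r *: m, r *: ae).
        rewrite {1}(re r Ir) -scalerA; exact: G0Z.
      apply: G0f; rewrite E0; exact: G0D.
  have sub : G0 `<=` G'.
    move=> [x a] H; exists x, a, 0; split => //.
    by rewrite !scale0r !addr0.
  have G'sub : G' `<=` G0.
    apply: contrapT => nsub; apply: (G0max G'); last by right.
    by split.
  exists ae; apply: G'sub; exists 0, 0, 1; split; first exact: G00.
  by rewrite !add0r !scale1r.
pose hf (m : M) : A := projT1 (cid (dom m)).
have hP : forall m, G0 (m, hf m) by move=> m; exact: (projT2 (cid (dom m))).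
have hlin : forall r x y, hf (r *: x + y) = r *: hf x + hf y.
  move=> r x y.
  have := G0D _ _ _ _ (hP (r *: x + y))
     (G0N _ _ (G0D _ _ _ _ (G0Z r _ _ (hP x)) (hP y))).
  rewrite subrr => /G0f /eqP; rewrite subr_eq0 => /eqP.
  done.
have [hl hlE] := mk_linear hlin.
exists s => //; exists hl => a; rewrite hlE.
have := G0D _ _ _ _ (hP (f a)) (G0N _ _ (G0b a)).
rewrite subrr => /G0f /eqP; rewrite subr_eq0 => /eqP.
done.
Qed.

End Fwd.

Theorem proposition3p8 (R : comPzRingType) (S : R -> Prop) :
  multiplicative_subset S -> nonzerodivisors S ->
  (uS_semisimple_ring S <-> semisimple_ring R).
Proof.
move=> HS Hnz; split.
- exact: reverse.
- exact: forward.
Qed.
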